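(* Let $K$ be an idempotent ordered TGP-$\omega$-valuation monoid, $AP$ a finite set of atomic propositions, $k\in K\setminus\{\mathbf{0},\mathbf{1}\}$ and $\varphi\in k\text{-}\vee\text{-}t\text{-}RULTL(K,AP)$. Then $\|\varphi\|:(\mathcal{P}(AP))^{\omega}\to K$ is $k$-safe.
   Context: Idempotent ordered TGP-$\omega$-valuation monoid $(K,+,\cdot,Val^{\omega},\mathbf{0},\mathbf{1})$: complete monoid $(K,+,\mathbf{0})$ (infinitary sums over arbitrary index sets with the usual axioms), idempotent, totally ordered by the natural order $k\le k'$ iff $k'=k'+k$; $Val^{\omega}$ maps finitely-valued sequences in $K$ to $K$; $\cdot$ has zero $\mathbf{0}$ and unit $\mathbf{1}$; $Val^{\omega}=\mathbf{0}$ if some entry is $\mathbf{0}$; $Val^{\omega}(\mathbf{1}^{\omega})=\mathbf{1}$; $\sum_I(k\cdot\mathbf{1})=k\cdot\sum_I\mathbf{1}$; $Val^{\omega}$ distributes over finite sums of families each entirely in $L\setminus\{\mathbf{0},\mathbf{1}\}$ or entirely in $\{\mathbf{0},\mathbf{1}\}$ ($L\subseteq K$ finite); $Val^{\omega}(\mathbf{1},k_1,\dots)=Val^{\omega}(k_1,\dots)$, $Val^{\omega}(k,\mathbf{1},\dots)=k$, $k\le\mathbf{1}$, $k_i\ge k\ \forall i\Rightarrow Val^{\omega}((k_i)_i)\ge k$. Weighted LTL over $AP$ and $K$: $\varphi::=k\mid a\mid\neg a\mid\varphi\vee\varphi\mid\varphi\wedge\varphi\mid\bigcirc\varphi\mid\varphi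 U\varphi\mid\square\varphi$, semantics: $(\|k\|,w)=k$; $(\|a\|,w)=\mathbf{1}$ if $a\in w(0)$ else $\mathbf{0}$; $\neg a$ dually; $\vee\mapsto+$, $\wedge\mapsto\cdot$; $(\|\bigcirc\varphi\|,w)=(\|\varphi\|,w_{\ge1})$; $(\|\varphi U\psi\|,w)=\sum_{i\ge0}Val^{\omega}((\|\varphi\|,w_{\ge0}),\dots,(\|\varphi\|,w_{\ge i-1}),(\|\psi\|,w_{\ge i}),\mathbf{1},\mathbf{1},\dots)$; $(\|\square\varphi\|,w)=Val^{\omega}(((\|\varphi\|,w_{\ge i}))_{i\ge0})$. $true:=\mathbf{1}$, $\varphi\tilde U\psi:=\square\varphi\vee(\varphi U\psi)$. $sbLTL(K,AP)$: $\varphi::=true\mid a\mid\neg a\mid\varphi\vee\varphi\mid\varphi\wedge\varphi\mid\bigcirc\varphi\mid\varphi\tilde U\varphi\mid\square\varphi$. $L_k=\{k'\in K\mid k'\ge k\}$. $k\text{-}stLTL(K,AP)$: formulas $\bigvee_{1\le i\le n}(k_i\wedge\varphi_i)$, $k_i\in L_k\setminus\{\mathbf{0},\mathbf{1}\}$, $\varphi_i\in sbLTL(K,AP)$. $k\text{-}\vee\text{-}t\text{-}RULTL(K,AP)$ is the least class of formulas such that: (1) every $k'\in L_k$ is in it; (2) $sbLTL(K,AP)\subseteq$ it; (3) $k\text{-}stLTL(K,AP)\subseteq$ it; (4) closed under $\bigcirc$; (5) if $\varphi,\psi\in k\text{-}stLTL(K,AP)$ then $\varphi\vee\psi$ is in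 it; (6) if $\varphi\in sbLTL(K,AP)$ and $\psi\in k\text{-}stLTL(K,AP)$, or $\psi=\xi\tilde U\lambda$, or $\psi=\square\xi$ with $\xi,\lambda\in k\text{-}stLTL(K,AP)$, then $\varphi\wedge\psi,\psi\wedge\varphi$ are in it; (7) if $\varphi,\psi\in k\text{-}stLTL(K,AP)$ then $\varphi\tilde U\psi$ is in it; (8) if $\varphi\in k\text{-}stLTL(K,AP)$ then $\square\varphi$ is in it. A series $s$ is $k$-safe if for every $w$: whenever for every $i>0$ there is $u$ with $(s,w_{<i}u)\ge k$ ($w_{<i}$ the length-$i$ prefix), then $(s,w)\ge k$. *)

(* Defs.v *)
From Stdlib Require Import List Arith PeanoNat.

Definition fin_valued {K : Type} (s : nat -> K) : Prop :=
  exists l : list K, forall i, In (s i) l.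

(** Idempotent ordered TGP-omega-valuation monoid.
    [csum I f] is the infinitary sum over an arbitrary index type [I].
    [Val] is total on [nat -> K]; its axioms are only imposed on
    finitely-valued sequences (the domain of Val^omega in the paper). *)
Record TGPMonoid := {
  car :> Type;
  add : car -> car -> car;
  zero : car;
  one : car;
  mul : car -> car -> car;
  csum : forall I : Type, (I -> car) -> car;
  Val : (nat -> car) -> car;
  add_assoc : forall x y z, add x (add y z) = add (add x y) z;
  add_comm : forall x y, add x y = add y x;
  add_0l : forall x, add zero x = x;
  csum_empty : forall (I : Type) (f : I -> car), (I -> False) -> csum I f = zero;
  csum_single : forall (I : Type) (f : I -> car) (i0 : I),
      (forall i, i = i0) -> csum I f = f i0;
  csum_pair : forall f : bool -> car, csum bool f = add (f true) (f false);
  csum_partition : forall (J : Type) (I : J -> Type) (f : {j : J & I j} -> car),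
      csum {j : J & I j} f = csum J (fun j => csum (I j) (fun i => f (existT _ j i)));
  csum_bij : forall (I I' : Type) (e : I -> I') (e' : I' -> I),
      (forall x, e' (e x) = x) -> (forall y, e (e' y) = y) ->
      forall f : I' -> car, csum I (fun i => f (e i)) = csum I' f;
  add_idem : forall x, add x x = x;
  (* natural order (x <= y iff y = y + x) is total *)
  nat_order_total : forall x y, y = add y x \/ x = add x y;
  mul_0l : forall x, mul zero x = zero;
  mul_0r : forall x, mul x zero = zero;
  mul_1l : forall x, mul one x = x;
  mul_1r : forall x, mul x one = x;
  Val_zero : forall s : nat -> car, fin_valued s -> (exists i, s i = zero) -> Val s = zero;
  Val_ones : Val (fun _ => one) = one;
  csum_mul_one : forall (I : Type) (k : car),
      csum I (fun _ => mul k one) = mul k (csum I (fun _ => one));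
  Val_distr : forall (L : list car) (n : nat -> nat)
      (f : forall j : nat, {i : nat | i < n j} -> car),
      (forall j, (forall i, In (f j i) L /\ f j i <> zero /\ f j i <> one)
              \/ (forall i, f j i = zero \/ f j i = one)) ->
      Val (fun j => csum {i : nat | i < n j} (f j))
      = csum (forall j : nat, {i : nat | i < n j}) (fun c => Val (fun j => f j (c j)));
  Val_one_head : forall s : nat -> car, fin_valued s ->
      Val (fun i => match i with 0 => one | S i' => s i' end) = Val s;
  Val_head_ones : forall k, Val (fun i => match i with 0 => k | S _ => one end) = k;
  le_one : forall k, one = add one k;
  Val_lower : forall (s : nat -> car) (k : car), fin_valued s ->
      (forall i, s i = add (s i) k) -> Val s = add (Val s) k
}.

Set Implicit Arguments.

Definition kle (K : TGPMonoid) (x y : K) : Prop := y = add K y x.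

Section LTL.
Variables (K : TGPMonoid) (AP : Type).

Definition word := nat -> (AP -> bool).

Definition suffix (w : word) (i : nat) : word := fun n => w (i + n).

Definition prefix_concat (w : word) (i : nat) (u : word) : word :=
  fun j => if j <? i then w j else u (j - i).

Inductive formula : Type :=
| FConst : car K -> formula
| FAtom : AP -> formula
| FNAtom : AP -> formula
| FOr : formula -> formula -> formula
| FAnd : formula -> formula -> formula
| FNext : formula -> formula
| FUntil : formula -> formula -> formula
| FBox : formula -> formula.

Fixpoint sem (phi : formula) (w : word) {struct phi} : car K :=
  match phi with
  | FConst k => k
  | FAtom a => if w 0 a then one K else zero K
  | FNAtom a => if w 0 a then zero K else one K
  | FOr p q => add K (sem p w) (sem q w)
  | FAnd p q => mul K (sem p w) (sem q w)
  | FNext p => sem p (suffix w 1)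
  | FUntil p q =>
      csum K nat (fun i => Val K (fun j =>
        if j <? i then sem p (suffix w j)
        else if j =? i then sem q (suffix w i) else one K))
  | FBox p => Val K (fun i => sem p (suffix w i))
  end.

Definition FTrue : formula := FConst (one K).
Definition FWUntil (p q : formula) : formula := FOr (FBox p) (FUntil p q).

Inductive sbLTL : formula -> Prop :=
| sb_true : sbLTL FTrue
| sb_atom : forall a, sbLTL (FAtom a)
| sb_natom : forall a, sbLTL (FNAtom a)
| sb_or : forall p q, sbLTL p -> sbLTL q -> sbLTL (FOr p q)
| sb_and : forall p q, sbLTL p -> sbLTL q -> sbLTL (FAnd p q)
| sb_next : forall p, sbLTL p -> sbLTL (FNext p)
| sb_wuntil : forall p q, sbLTL p -> sbLTL q -> sbLTL (FWUntil p q)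
| sb_box : forall p, sbLTL p -> sbLTL (FBox p).

Variable k : car K.

Definition Lk (k' : car K) : Prop := @kle K k k'.

Inductive stLTL : formula -> Prop :=
| st_base : forall ki p, Lk ki -> ki <> zero K -> ki <> one K -> sbLTL p ->
    stLTL (FAnd (FConst ki) p)
| st_or : forall p q, stLTL p -> stLTL q -> stLTL (FOr p q).

Inductive RULTL : formula -> Prop :=
| r_const : forall k', Lk k' -> RULTL (FConst k')
| r_sb : forall p, sbLTL p -> RULTL p
| r_st : forall p, stLTL p -> RULTL p
| r_next : forall p, RULTL p -> RULTL (FNext p)
| r_or : forall p q, stLTL p -> stLTL q -> RULTL (FOr p q)
| r_and_st_l : forall p q, sbLTL p -> stLTL q -> RULTL (FAnd p q)
| r_and_st_r : forall p q, sbLTL p -> stLTL q -> RULTL (FAnd q p)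
| r_and_wu_l : forall p x l, sbLTL p -> stLTL x -> stLTL l -> RULTL (FAnd p (FWUntil x l))
| r_and_wu_r : forall p x l, sbLTL p -> stLTL x -> stLTL l -> RULTL (FAnd (FWUntil x l) p)
| r_and_box_l : forall p x, sbLTL p -> stLTL x -> RULTL (FAnd p (FBox x))
| r_and_box_r : forall p x, sbLTL p -> stLTL x -> RULTL (FAnd (FBox x) p)
| r_wuntil : forall p q, stLTL p -> stLTL q -> RULTL (FWUntil p q)
| r_box : forall p, stLTL p -> RULTL (FBox p).

Definition k_safe (s : word -> car K) : Prop :=
  forall w : word,
    (forall i, 0 < i -> exists u : word, @kle K k (s (prefix_concat w i u))) ->
    @kle K k (s w).

End LTL.

(* Main.v *)
Require Import Defs.
From Stdlib Require Import List.
From Stdlib Require Import Arith Lia Classical FunctionalExtensionality ProofIrrelevance.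

Section Proof.
Variable K : TGPMonoid.
Variable AP : Type.
Variable k : car K.
Hypothesis hk0 : k <> zero K.

Local Notation le := (@kle K).

Lemma le_refl x : le x x.
Proof. unfold kle; rewrite add_idem; reflexivity. Qed.

Lemma le_trans x y z : le x y -> le y z -> le x z.
Proof.
  unfold kle; intros H1 H2. transitivity (add K z y); [exact H2|].
  rewrite H1. rewrite add_assoc, <- H2. reflexivity.
Qed.

Lemma le_add_l x y : le x (add K x y).
Proof. unfold kle. rewrite (add_comm K (add K x y) x), add_assoc, add_idem; reflexivity. Qed.

Lemma le_add_r x y : le y (add K x y).
Proof. rewrite add_comm; apply le_add_l. Qed.

Lemma le_antisym x y : le x y -> le y x -> x = y.
Proof. unfold kle; intros H1 H2. rewrite H2. rewrite add_comm. symmetry; exact H1. Qed.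

Lemma le_1 x : le x (one K).
Proof. exact (le_one K x). Qed.

Lemma not_le_k0 : ~ le k (zero K).
Proof. intro H; unfold kle in H; rewrite add_0l in H. apply hk0; symmetry; exact H. Qed.

Lemma le_add_inv x y : le k (add K x y) -> le k x \/ le k y.
Proof.
  intro H. destruct (nat_order_total K x y) as [H1|H1].
  - right. rewrite add_comm, <- H1 in H. exact H.
  - left. rewrite <- H1 in H. exact H.
Qed.

Definition good v := v = zero K \/ le k v.
Definition isbool (v : car K) := v = zero K \/ v = one K.

Lemma isbool_good v : isbool v -> good v.
Proof. intros [H|H]; [left; auto | right; rewrite H; apply le_1]. Qed.

Lemma E1 (w u : word AP) n j :
  suffix (prefix_concat w (n+j) u) j = prefix_concat (suffix w j) n u.
Proof.
  unfold suffix, prefix_concat. apply functional_extensionality; intro m.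
  destruct (Nat.ltb_spec (j+m) (n+j)), (Nat.ltb_spec m n); try lia; try reflexivity.
  f_equal; lia.
Qed.

Lemma E2 (w u : word AP) m m' : m <= m' ->
  prefix_concat w m' u = prefix_concat w m (suffix (prefix_concat w m' u) m).
Proof.
  intro Hm. unfold prefix_concat, suffix. apply functional_extensionality; intro x.
  destruct (Nat.ltb_spec x m).
  - destruct (Nat.ltb_spec x m'); [reflexivity|lia].
  - replace (m + (x - m)) with x by lia. reflexivity.
Qed.

Lemma E0 (w u : word AP) : prefix_concat w 0 u = u.
Proof.
  unfold prefix_concat. apply functional_extensionality; intro x.
  simpl. rewrite Nat.sub_0_r. reflexivity.
Qed.

Definition closed (P : word AP -> Prop) :=
  forall w, (forall n, exists u, P (prefix_concat w n u)) -> P w.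

Lemma closed_bad P w : closed P -> ~ P w -> exists m, forall u, ~ P (prefix_concat w m u).
Proof.
  intros HP Hn. apply NNPP; intro H. apply Hn, HP. intro n.
  apply NNPP; intro H2. apply H. exists n. intros u Hu. apply H2. exists u; exact Hu.
Qed.

Lemma bad_mono (P : word AP -> Prop) w m m' : m <= m' ->
  (forall u, ~ P (prefix_concat w m u)) -> forall u, ~ P (prefix_concat w m' u).
Proof. intros Hm H u. rewrite (E2 w u m m' Hm). apply H. Qed.

Lemma closed_ext (P Q : word AP -> Prop) : (forall w, P w <-> Q w) -> closed P -> closed Q.
Proof.
  intros He HP w H. apply He. apply HP. intro n. destruct (H n) as [u Hu].
  exists u. apply He. exact Hu.
Qed.

Lemma closed_or P Q : closed P -> closed Q -> closed (fun w => P w \/ Q w).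
Proof.
  intros HP HQ w H.
  destruct (classic (P w)) as [Hp|Hp]; [left; exact Hp|].
  destruct (classic (Q w)) as [Hq|Hq]; [right; exact Hq|].
  destruct (closed_bad _ _ HP Hp) as [m1 H1].
  destruct (closed_bad _ _ HQ Hq) as [m2 H2].
  destruct (H (Nat.max m1 m2)) as [u [Hu|Hu]].
  - exfalso. exact (bad_mono _ _ _ _ (Nat.le_max_l m1 m2) H1 _ Hu).
  - exfalso. exact (bad_mono _ _ _ _ (Nat.le_max_r m1 m2) H2 _ Hu).
Qed.

Lemma closed_forall (P : nat -> word AP -> Prop) :
  (forall j, closed (P j)) -> closed (fun w => forall j, P j w).
Proof.
  intros HP w H j. apply HP. intro n. destruct (H n) as [u Hu]. exists u. apply Hu.
Qed.

Lemma closed_and P Q : closed P -> closed Q -> closed (fun w => P w /\ Q w).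
Proof.
  intros HP HQ w H. split.
  - apply HP. intro n. destruct (H n) as [u Hu]. exists u. apply Hu.
  - apply HQ. intro n. destruct (H n) as [u Hu]. exists u. apply Hu.
Qed.

Lemma closed_shift (P : word AP -> Prop) j : closed P -> closed (fun w => P (suffix w j)).
Proof.
  intros HP w H. apply HP. intro n. destruct (H (n + j)) as [u Hu].
  exists u. rewrite <- E1. exact Hu.
Qed.

Lemma closed_const (c : Prop) : closed (fun _ => c).
Proof. intros w H. destruct (H 0) as [u Hu]. exact Hu. Qed.

Lemma closed_bounded_ex (P : nat -> word AP -> Prop) :
  (forall i, closed (P i)) -> forall j, closed (fun w => exists i, i <= j /\ P i w).
Proof.
  intros HP j. induction j.
  - apply closed_ext with (P := P 0); [|apply HP].
    intro w; split; [intro H; exists 0; split; auto|].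
    intros [i [Hi H]]. replace i with 0 in H by lia. exact H.
  - apply closed_ext with (P := fun w => (exists i, i <= j /\ P i w) \/ P (S j) w).
    + intro w; split.
      * intros [[i [Hi H]]|H]; [exists i; split; [lia|auto] | exists (S j); split; auto].
      * intros [i [Hi H]]. destruct (Nat.eq_dec i (S j)); [subst; right; auto|].
        left; exists i; split; [lia|auto].
    + apply closed_or; auto.
Qed.

Lemma closed_dep0 (P : word AP -> Prop) :
  (forall w w', w 0 = w' 0 -> P w -> P w') -> closed P.
Proof.
  intros HP w H. destruct (H 1) as [u Hu]. eapply HP; [|exact Hu].
  reflexivity.
Qed.

Lemma Val_good (s : nat -> car K) : fin_valued s -> (forall j, good (s j)) ->
  good (Val K s) /\ (le k (Val K s) <-> forall j, le k (s j)).
Proof.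
  intros Hf Hg. destruct (classic (forall j, le k (s j))) as [H|H].
  - assert (le k (Val K s)) by (apply Val_lower; auto).
    split; [right; auto | split; auto].
  - apply not_all_ex_not in H. destruct H as [j Hj].
    assert (Hz : s j = zero K) by (destruct (Hg j); [auto|contradiction]).
    assert (HV : Val K s = zero K) by (apply Val_zero; eauto).
    rewrite HV. split; [left; auto|]. split; [intro H; exfalso; apply not_le_k0; auto|].
    intro H; exfalso; apply Hj, H.
Qed.

Lemma Val_bool (s : nat -> car K) : (forall j, isbool (s j)) -> isbool (Val K s).
Proof.
  intros Hb.
  assert (Hf : fin_valued s).
  { exists (zero K :: one K :: nil). intro i. destruct (Hb i) as [H|H]; rewrite H; simpl; auto. }
  destruct (classic (exists j, s j = zero K)) as [H|H].
  - left. apply Val_zero; auto.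
  - right. replace s with (fun _ : nat => one K). { apply Val_ones. }
    apply functional_extensionality; intro j. destruct (Hb j) as [H1|H1]; auto.
    exfalso; apply H; exists j; auto.
Qed.

Definition IB (i0 : nat) (b : bool) := {n : nat | Nat.eqb n i0 = b}.

Lemma csum_ge (f : nat -> car K) i0 : le (f i0) (csum K nat f).
Proof.
  set (e := fun p : {b : bool & IB i0 b} => proj1_sig (projT2 p)).
  set (e' := fun n : nat => existT (IB i0) (Nat.eqb n i0) (exist _ n eq_refl)).
  assert (H1 : forall x, e' (e x) = x).
  { intros [b [n H]]. unfold e, e'; simpl. subst b. reflexivity. }
  assert (H2 : forall y, e (e' y) = y) by reflexivity.
  rewrite <- (csum_bij K _ _ e e' H1 H2 f).
  rewrite (csum_partition K bool (IB i0) (fun p => f (e p))).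
  rewrite csum_pair.
  rewrite (csum_single K _ _ (exist _ i0 (Nat.eqb_refl i0) : IB i0 true)).
  - apply le_add_l.
  - intros [n H]. pose proof H as H'. apply Nat.eqb_eq in H'. subst n.
    f_equal. apply proof_irrelevance.
Qed.

Lemma csum_zero (f : nat -> car K) : (forall i, f i = zero K) -> csum K nat f = zero K.
Proof.
  intro H. replace f with (fun _ : nat => mul K (zero K) (one K)).
  - rewrite csum_mul_one, mul_0l. reflexivity.
  - apply functional_extensionality; intro i. rewrite mul_0l, H; reflexivity.
Qed.

Lemma csum_good (f : nat -> car K) : (forall i, good (f i)) ->
  good (csum K nat f) /\ (le k (csum K nat f) <-> exists i, le k (f i)).
Proof.
  intro Hg. destruct (classic (exists i, le k (f i))) as [[i Hi]|H].
  - assert (le k (csum K nat f)) by (eapply le_trans; [exact Hi| apply csum_ge]).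
    split; [right; auto|split; eauto].
  - assert (Hz : csum K nat f = zero K).
    { apply csum_zero. intro i. destruct (Hg i); auto. exfalso; apply H; eauto. }
    rewrite Hz. split; [left; auto|]. split; [intro H1; exfalso; apply not_le_k0; auto|].
    intro H1; contradiction.
Qed.

Lemma csum_bool (f : nat -> car K) : (forall i, isbool (f i)) -> isbool (csum K nat f).
Proof.
  intro Hb. destruct (classic (exists i, f i = one K)) as [[i Hi]|H].
  - right. apply le_antisym; [apply le_1|]. rewrite <- Hi. apply csum_ge.
  - left. apply csum_zero. intro i. destruct (Hb i); auto. exfalso; apply H; eauto.
Qed.

Definition Inv (p : formula K AP) :=
  (forall w, good (sem p w)) /\ closed (fun w => le k (sem p w)).
Definition Bool (p : formula K AP) := forall w, isbool (sem p w).
Definition Fin (p : formula K AP) := exists l, forall w, In (sem p w) l.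

Lemma Bool_Fin p : Bool p -> Fin p.
Proof.
  intro Hb. exists (zero K :: one K :: nil). intro w. destruct (Hb w) as [H|H]; rewrite H; simpl; auto.
Qed.

Lemma Inv_const c : good c -> Inv (FConst K AP c).
Proof. intro Hc. split; [intro w; exact Hc | exact (closed_const (le k c))]. Qed.

Lemma Inv_atom a : Inv (FAtom K a).
Proof.
  split.
  - intro w; simpl. destruct (w 0 a); [right; apply le_1 | left; auto].
  - apply closed_dep0. intros w w' H. simpl. rewrite H. auto.
Qed.

Lemma Inv_natom a : Inv (FNAtom K a).
Proof.
  split.
  - intro w; simpl. destruct (w 0 a); [left; auto | right; apply le_1].
  - apply closed_dep0. intros w w' H. simpl. rewrite H. auto.
Qed.

Lemma Inv_or p q : Inv p -> Inv q -> Inv (FOr p q).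
Proof.
  intros [Hg1 Hc1] [Hg2 Hc2]. split.
  - intro w; simpl. destruct (Hg1 w) as [H1|H1].
    + rewrite H1, add_0l. apply Hg2.
    + right. eapply le_trans; [exact H1|apply le_add_l].
  - apply closed_ext with (P := fun w => le k (sem p w) \/ le k (sem q w)).
    + intro w; simpl; split.
      * intros [H|H]; eapply le_trans; eauto using le_add_l, le_add_r.
      * apply le_add_inv.
    + apply closed_or; auto.
Qed.

Lemma Inv_and_l p q : Bool p -> Inv p -> Inv q -> Inv (FAnd p q).
Proof.
  intros Hb [Hg1 Hc1] [Hg2 Hc2]. split.
  - intro w; simpl. destruct (Hb w) as [H|H]; rewrite H; [rewrite mul_0l; left; auto | rewrite mul_1l; auto].
  - apply closed_ext with (P := fun w => le k (sem p w) /\ le k (sem q w)).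
    + intro w; simpl. destruct (Hb w) as [H|H]; rewrite H.
      * rewrite mul_0l. split; [intros [H1 _]; auto | intro H1; exfalso; apply not_le_k0; auto].
      * rewrite mul_1l. split; [intros [_ H1]; auto | intro H1; split; auto; apply le_1].
    + apply closed_and; auto.
Qed.

Lemma Inv_and_r q p : Inv q -> Bool p -> Inv p -> Inv (FAnd q p).
Proof.
  intros [Hg2 Hc2] Hb [Hg1 Hc1]. split.
  - intro w; simpl. destruct (Hb w) as [H|H]; rewrite H; [rewrite mul_0r; left; auto | rewrite mul_1r; auto].
  - apply closed_ext with (P := fun w => le k (sem q w) /\ le k (sem p w)).
    + intro w; simpl. destruct (Hb w) as [H|H]; rewrite H.
      * rewrite mul_0r. split; [intros [_ H1]; auto | intro H1; exfalso; apply not_le_k0; auto].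
      * rewrite mul_1r. split; [intros [H1 _]; auto | intro H1; split; auto; apply le_1].
    + apply closed_and; auto.
Qed.

Lemma Inv_next p : Inv p -> Inv (FNext p).
Proof.
  intros [Hg Hc]. split.
  - intro w; simpl. apply Hg.
  - exact (closed_shift _ 1 Hc).
Qed.

Lemma Inv_box p : Fin p -> Inv p -> Inv (FBox p).
Proof.
  intros [l Hl] [Hg Hc].
  assert (HV : forall w, good (Val K (fun i => sem p (suffix w i))) /\
     (le k (Val K (fun i => sem p (suffix w i))) <-> forall j, le k (sem p (suffix w j)))).
  { intro w. apply Val_good; [exists l; intro i; apply Hl | intro j; apply Hg]. }
  split.
  - intro w; simpl. apply HV.
  - apply closed_ext with (P := fun w => forall j, le k (sem p (suffix w j))).
    + intro w; simpl. symmetry; apply HV.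
    + apply (closed_forall (fun j w => le k (sem p (suffix w j)))).
      intro j. exact (closed_shift _ j Hc).
Qed.

Lemma wu_aux (X Q : nat -> Prop) : (forall j, X j \/ exists i, i <= j /\ Q i) ->
  forall n, (forall j, j < n -> X j) \/ exists i, i < n /\ (forall j, j < i -> X j) /\ Q i.
Proof.
  intros H n. induction n.
  - left; intros; lia.
  - destruct IHn as [H1 | [i [Hi [H2 H3]]]].
    + destruct (H n) as [Hx | [i [Hi Hq]]].
      * left. intros j Hj. destruct (Nat.eq_dec j n); [subst; auto|]. apply H1; lia.
      * right. exists i. split; [lia|]. split; [intros; apply H1; lia|auto].
    + right. exists i. split; [lia|auto].
Qed.

Definition useq (p q : formula K AP) (w : word AP) (i : nat) : nat -> car K :=
  fun j => if j <? i then sem p (suffix w j)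
        else if j =? i then sem q (suffix w i) else one K.

Lemma Inv_wu p q : Fin p -> Inv p -> Fin q -> Inv q -> Inv (FWUntil p q).
Proof.
  intros [lp Hlp] [Hg1 Hc1] [lq Hlq] [Hg2 Hc2].
  assert (HS : forall w i, good (Val K (useq p q w i)) /\
     (le k (Val K (useq p q w i)) <->
        (forall j, j < i -> le k (sem p (suffix w j))) /\ le k (sem q (suffix w i)))).
  { intros w i. destruct (Val_good (useq p q w i)) as [G I].
    - exists (lp ++ lq ++ one K :: nil). intro j. unfold useq.
      destruct (j <? i); [apply in_or_app; left; apply Hlp|].
      apply in_or_app; right; apply in_or_app.
      destruct (j =? i); [left; apply Hlq | right; simpl; auto].
    - intro j. unfold useq. destruct (j <? i); [apply Hg1|].
      destruct (j =? i); [apply Hg2 | right; apply le_1].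
    - split; [exact G|]. rewrite I. split.
      + intro H. split.
        * intros j Hj. specialize (H j). unfold useq in H.
          rewrite (proj2 (Nat.ltb_lt j i) Hj) in H. exact H.
        * specialize (H i). unfold useq in H. rewrite Nat.ltb_irrefl, Nat.eqb_refl in H. exact H.
      + intros [H1 H2] j. unfold useq. destruct (Nat.ltb_spec j i); [apply H1; auto|].
        destruct (Nat.eqb_spec j i); [subst; exact H2 | apply le_1]. }
  assert (HB : forall w, good (Val K (fun i => sem p (suffix w i))) /\
     (le k (Val K (fun i => sem p (suffix w i))) <-> forall j, le k (sem p (suffix w j)))).
  { intro w. apply Val_good; [exists lp; intro i; apply Hlp | intro j; apply Hg1]. }
  assert (HC : forall w, good (csum K nat (fun i => Val K (useq p q w i))) /\
     (le k (csum K nat (fun i => Val K (useq p q w i))) <-> exists i, le k (Val K (useq p q w i)))).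
  { intro w. apply csum_good. intro i. apply HS. }
  assert (Hsem : forall w, sem (FWUntil p q) w =
     add K (Val K (fun i => sem p (suffix w i))) (csum K nat (fun i => Val K (useq p q w i)))).
  { intro w. reflexivity. }
  split.
  - intro w. rewrite Hsem. destruct (proj1 (HB w)) as [H1|H1].
    + rewrite H1, add_0l. apply HC.
    + right. eapply le_trans; [exact H1|apply le_add_l].
  - apply closed_ext with (P := fun w => forall j, le k (sem p (suffix w j)) \/
                               exists i, i <= j /\ le k (sem q (suffix w i))).
    + intro w. rewrite Hsem. split.
      * intro HW. destruct (classic (forall j, le k (sem p (suffix w j)))) as [Hall|Hn].
        { eapply le_trans; [apply (proj2 (HB w)); exact Hall | apply le_add_l]. }
        apply not_all_ex_not in Hn. destruct Hn as [j0 Hj0].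
        destruct (wu_aux _ _ HW (S j0)) as [H1 | [i [Hi [H2 H3]]]].
        { exfalso. apply Hj0, H1. lia. }
        eapply le_trans; [|apply le_add_r].
        apply (proj2 (proj2 (HC w))). exists i. apply (proj2 (HS w i)). auto.
      * intro H. apply le_add_inv in H. destruct H as [H|H].
        { intro j; left. apply (proj1 (proj2 (HB w)) H). }
        apply (proj2 (HC w)) in H. destruct H as [i Hi].
        apply (proj2 (HS w i)) in Hi. destruct Hi as [H1 H2].
        intro j. destruct (Nat.ltb_spec j i); [left; auto|right; exists i; split; auto].
    + apply (closed_forall (fun j w => le k (sem p (suffix w j)) \/
                               exists i, i <= j /\ le k (sem q (suffix w i)))).
      intro j. apply closed_or.
      * exact (closed_shift _ j Hc1).
      * apply (closed_bounded_ex (fun i w => le k (sem q (suffix w i)))).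
        intro i. exact (closed_shift _ i Hc2).
Qed.

Lemma Bool_or p q : Bool p -> Bool q -> Bool (FOr p q).
Proof.
  intros H1 H2 w; simpl. destruct (H1 w) as [a|a]; destruct (H2 w) as [b|b]; rewrite a, b.
  - left; apply add_0l.
  - right; apply add_0l.
  - right; rewrite add_comm; apply add_0l.
  - right; apply add_idem.
Qed.

Lemma Bool_and p q : Bool p -> Bool q -> Bool (FAnd p q).
Proof.
  intros H1 H2 w; simpl. destruct (H1 w) as [a|a]; rewrite a.
  - left; apply mul_0l.
  - rewrite mul_1l; apply H2.
Qed.

Lemma Bool_next p : Bool p -> Bool (FNext p).
Proof. intros H w; simpl; apply H. Qed.

Lemma Bool_box p : Bool p -> Bool (FBox p).
Proof. intros H w; simpl. apply Val_bool. intro j; apply H. Qed.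

Lemma Bool_wu p q : Bool p -> Bool q -> Bool (FWUntil p q).
Proof.
  intros H1 H2. unfold FWUntil. apply Bool_or; [apply Bool_box; auto|].
  intro w; simpl. apply csum_bool. intro i. apply Val_bool. intro j.
  destruct (j <? i); [apply H1|]. destruct (j =? i); [apply H2|right; auto].
Qed.

Lemma sb_inv p : sbLTL p -> Bool p /\ Inv p.
Proof.
  induction 1.
  - split; [intro w; right; reflexivity | apply Inv_const; right; apply le_1].
  - split; [intro w; simpl; destruct (w 0 a); [right|left]; auto | apply Inv_atom].
  - split; [intro w; simpl; destruct (w 0 a); [left|right]; auto | apply Inv_natom].
  - split; [apply Bool_or; tauto | apply Inv_or; tauto].
  - split; [apply Bool_and; tauto | apply Inv_and_l; tauto].
  - split; [apply Bool_next; tauto | apply Inv_next; tauto].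
  - split; [apply Bool_wu; tauto | apply Inv_wu; try apply Bool_Fin; tauto].
  - split; [apply Bool_box; tauto | apply Inv_box; try apply Bool_Fin; tauto].
Qed.

Lemma st_inv p : stLTL k p -> Fin p /\ Inv p.
Proof.
  induction 1.
  - destruct (sb_inv _ H2) as [Hb Hi]. split.
    + exists (zero K :: ki :: nil). intro w; simpl. destruct (Hb w) as [a|a]; rewrite a.
      * rewrite mul_0r; simpl; auto.
      * rewrite mul_1r; simpl; auto.
    + apply Inv_and_r; auto. apply Inv_const. right; exact H.
  - destruct IHstLTL1 as [[l1 H1] I1]. destruct IHstLTL2 as [[l2 H2] I2]. split.
    + exists (flat_map (fun a => map (add K a) l2) l1). intro w; simpl.
      apply in_flat_map. exists (sem p w). split; auto. apply in_map; auto.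
    + apply Inv_or; auto.
Qed.

Lemma rultl_inv p : RULTL k p -> Inv p.
Proof.
  induction 1.
  - apply Inv_const; right; exact H.
  - apply sb_inv; auto.
  - apply st_inv; auto.
  - apply Inv_next; auto.
  - apply Inv_or; apply st_inv; auto.
  - destruct (sb_inv _ H). apply Inv_and_l; auto. apply st_inv; auto.
  - destruct (sb_inv _ H). apply Inv_and_r; auto. apply st_inv; auto.
  - destruct (sb_inv _ H). destruct (st_inv _ H0), (st_inv _ H1).
    apply Inv_and_l; auto. apply Inv_wu; auto.
  - destruct (sb_inv _ H). destruct (st_inv _ H0), (st_inv _ H1).
    apply Inv_and_r; auto. apply Inv_wu; auto.
  - destruct (sb_inv _ H). destruct (st_inv _ H0). apply Inv_and_l; auto. apply Inv_box; auto.
  - destruct (sb_inv _ H). destruct (st_inv _ H0). apply Inv_and_r; auto. apply Inv_box; auto.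
  - destruct (st_inv _ H), (st_inv _ H0). apply Inv_wu; auto.
  - destruct (st_inv _ H). apply Inv_box; auto.
Qed.

End Proof.

Theorem corollary1 (K : TGPMonoid) (AP : Type)
    (AP_finite : exists l : list AP, forall a : AP, In a l)
    (k : car K) (hk0 : k <> zero K) (hk1 : k <> one K)
    (phi : formula K AP) (hphi : RULTL k phi) :
  @k_safe K AP k (sem phi).
Proof.
  destruct (rultl_inv K AP k hk0 phi hphi) as [_ Hc].
  intros w H. apply Hc. intro n. destruct n as [|n].
  - destruct (H 1 ltac:(lia)) as [u Hu]. exists (prefix_concat w 1 u).
    rewrite E0. exact Hu.
  - apply H. lia.
Qed.
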